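(* Let $\mu>0$, $U>0$ and $\delta>2\mu U^{-1}$. Let $\gamma$ be a density matrix on $\mathbb{C}^\Lambda$ with density $\rho(x)=\gamma_{x,x}$, $\Omega=\{x:\rho(x)<\delta\}$, $\Omega^c=\{x:\rho(x)\ge\delta\}$, and define $\tilde\rho(x)=\rho(x)$ for $x\in\Omega^c$ and $\tilde\rho(x)=\min\{\frac{\mu}{2U},\rho(x)\}$ for $x\in\Omega$ (viewed also as a diagonal multiplication operator). Then $$\mathrm{Tr}\{[K_\mu+U\tilde\rho]_-\}\ \ge\ \mathrm{Tr}\{[P_\Omega(K_\mu+U\tilde\rho)P_\Omega]_-\}-\frac{8d^2}{U\delta}\,|\partial\Omega|.$$
   Context: $\Lambda=\mathbb{Z}_L^d$; $T_{x,y}=1$ if $|x-y|_1=1$, else $0$; $\Delta_{x,y}=T_{x,y}-2d\delta_{x,y}$; $K_\mu=-\Delta-\mu$; $[X]_-=\min\{X,0\}$. $P_A$ denotes the orthogonal projection of $\mathbb{C}^\Lambda$ onto functions supported in $A\subseteq\Lambda$. $\partial\Omega=\{x\in\Omega:\mathrm{dist}_1(x,\Omega^c)=1\}$ with $\mathrm{dist}_1$ the graph distance; $|\partial\Omega|$ its cardinality. *)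

(* Defs.v *)
From HB Require Import structures.
From mathcomp Require Import all_boot all_order all_algebra.
From mathcomp Require Import complex.
From mathcomp Require Import reals.
Set Implicit Arguments. Unset Strict Implicit. Unset Printing Implicit Defensive.
Import Order.TTheory GRing.Theory Num.Theory.
Local Open Scope ring_scope.

Section Lattice.
Variables (d L : nat).

(* The discrete torus Lambda = Z_L^d : maps from the d coordinates to Z/LZ. *)
Definition site := {ffun 'I_d -> 'I_L}.

Definition cdist (a b : 'I_L) : nat :=
  let k := if (a <= b)%N then (b - a)%N else (a - b)%N in minn k (L - k).

Definition l1dist (x y : site) : nat := (\sum_(i < d) cdist (x i) (y i))%N.

(* Lattice points indexed by the ordinal 'I_#|Lambda| (matrix indices). *)
Definition pt (i : 'I_#|{: site}|) : site := enum_val i.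

Definition bdry (Om : {set site}) : {set site} :=
  [set x in Om | [exists y, (y \notin Om) && (l1dist x y == 1)%N]].

Variable R : realType.
Local Notation C := (R[i]).
Local Notation N := #|{: site}|.

Definition Tmx : 'M[C]_N := \matrix_(i, j) (l1dist (pt i) (pt j) == 1%N)%:R.
Definition Lapmx : 'M[C]_N := Tmx - (2 * d)%:R%:M.
Definition Kmx (mu : R) : 'M[C]_N := - Lapmx - (mu%:C)%C%:M.

Definition multmx (f : site -> R) : 'M[C]_N :=
  diag_mx (\row_i ((f (pt i))%:C)%C).

Definition projmx (A : {set site}) : 'M[C]_N :=
  diag_mx (\row_i ((pt i \in A)%:R : C)).

End Lattice.

Local Open Scope sesquilinear_scope.

Definition density_matrix (R : realType) n (g : 'M[R[i]]_n) : Prop :=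
  g ^t* = g /\
  forall v : 'rV[R[i]]_n,
    0 <= (v *m g *m v ^t*) 0 0 /\ (v *m g *m v ^t*) 0 0 <= (v *m v ^t*) 0 0.

(* Tr [A]_- : sum of the negative eigenvalues (with multiplicity) of a
   self-adjoint matrix A, via the spectral decomposition of spectral.v *)
Definition negtrace (R : realType) n (A : 'M[R[i]]_n) : R :=
  \sum_(i < n) Num.min (complex.Re (spectral_diag A 0 i)) 0.

(* Main.v *)
Require Import Defs.
From HB Require Import structures.
From mathcomp Require Import all_boot all_order all_algebra.
From mathcomp Require Import complex.
From mathcomp Require Import reals.
From mathcomp Require Import ring lra zify.
Set Implicit Arguments. Unset Strict Implicit. Unset Printing Implicit Defensive.
Import Order.TTheory GRing.Theory Num.Theory.
Local Open Scope ring_scope.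
Local Open Scope sesquilinear_scope.

Section Cx.
Variable R : realType.
Local Notation C := (R[i]).

Definition nC (z : C) : R := complex.Re z ^+ 2 + complex.Im z ^+ 2.

Lemma nC_ge0 z : 0 <= nC z.
Proof. by rewrite /nC addr_ge0 // sqr_ge0. Qed.

Lemma mulcJ (z : C) : z * z^* = (nC z)%:C%C.
Proof.
case: z => a b; rewrite /nC /=.
apply/eqP; rewrite eq_complex /=; apply/andP; split; apply/eqP; ring.
Qed.

Lemma ReM (x y : C) : complex.Re (x * y) = complex.Re x * complex.Re y - complex.Im x * complex.Im y.
Proof. by case: x => a b; case: y => c e. Qed.

Lemma ImM (x y : C) : complex.Im (x * y) = complex.Re x * complex.Im y + complex.Im x * complex.Re y.
Proof. by case: x => a b; case: y => c e. Qed.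

Lemma ReD (x y : C) : complex.Re (x + y) = complex.Re x + complex.Re y.
Proof. by case: x => a b; case: y => c e. Qed.

Lemma ReN (x : C) : complex.Re (- x) = - complex.Re x.
Proof. by case: x. Qed.

Lemma ReB (x y : C) : complex.Re (x - y) = complex.Re x - complex.Re y.
Proof. by rewrite ReD ReN. Qed.

Lemma Re_sum I (r : seq I) (P : pred I) (F : I -> C) :
  complex.Re (\sum_(i <- r | P i) F i) = \sum_(i <- r | P i) complex.Re (F i).
Proof.
exact: (big_morph _ ReD (erefl (complex.Re (0:C)))).
Qed.

Lemma Rec (r : R) : complex.Re (r%:C)%C = r. Proof. by []. Qed.
Lemma Imc (r : R) : complex.Im (r%:C)%C = 0. Proof. by []. Qed.
Lemma ReJ (x : C) : complex.Re (x^*) = complex.Re x. Proof. by case: x. Qed.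
Lemma ImJ (x : C) : complex.Im (x^*) = - complex.Im x. Proof. by case: x. Qed.
Lemma conjR (r : R) : ((r%:C)%C)^* = (r%:C)%C.
Proof. by apply/eqP; rewrite eq_complex /= oppr0 !eqxx. Qed.
Lemma natc (k : nat) : (k%:R : C) = ((k%:R : R)%:C)%C.
Proof. by rewrite rmorph_nat. Qed.

Lemma cross_bound (t : R) (w b : C) : 0 < t ->
  - (t * nC w) - nC b / t <= 2 * complex.Re (w * b^*).
Proof.
move=> t0.
have h : 0 <= nC (t%:C%C * w + b) by exact: nC_ge0.
move: h; case: w => a1 a2; case: b => b1 b2; rewrite /nC /= => h.
have e : - (t * (a1 ^+ 2 + a2 ^+ 2)) - (b1 ^+ 2 + b2 ^+ 2) / t
  - 2 * (a1 * b1 - a2 * - b2) =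
  - (((t * a1 - 0 * a2 + b1) ^+ 2 + (t * a2 + 0 * a1 + b2) ^+ 2) / t).
  by field; rewrite gt_eqF.
rewrite -subr_le0 e oppr_le0; apply: divr_ge0 => //; exact: ltW.
Qed.

Lemma two_re_le (z w : C) : 2 * complex.Re (z * w^*) <= nC z + nC w.
Proof.
case: z => a b; case: w => c e; rewrite /nC /=.
have : 0 <= (a - c) ^+ 2 + (b - e) ^+ 2 by rewrite addr_ge0 // sqr_ge0.
lra.
Qed.

End Cx.
Lemma mulcJC (R : realType) (z : R[i]) : z * Num.conj z = ((nC z)%:C)%C.
Proof. exact: mulcJ. Qed.
Lemma conjCR (R : realType) (r : R) : Num.conj ((r%:C)%C) = (r%:C)%C.
Proof. exact: conjR. Qed.
Lemma ReJC (R : realType) (x : R[i]) : complex.Re (Num.conj x) = complex.Re x.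
Proof. by case: x. Qed.

Section Mx.
Variable R : realType.
Local Notation C := (R[i]).
Variable n : nat.

Definition qform (A : 'M[C]_n) (v : 'rV[C]_n) : R := complex.Re ((v *m A *m v^t*) 0 0).

Lemma sesqE (u w : 'rV[C]_n) (A : 'M[C]_n) :
  (u *m A *m w^t*) 0 0 = \sum_x \sum_y u 0 x * A x y * (w 0 y)^*.
Proof.
rewrite !mxE exchange_big /=; apply: eq_bigr => y _.
rewrite !mxE mulr_suml; by apply: eq_bigr => x _.
Qed.

Lemma row_sesq (M N B : 'M[C]_n) i j :
  (row i M *m B *m (row j N)^t*) 0 0 = (M *m B *m N^t*) i j.
Proof.
rewrite !mxE; apply: eq_bigr => k _; rewrite !mxE; congr (_ * _).
by apply: eq_bigr => l _; rewrite !mxE.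
Qed.

Lemma unitary_l (S : 'M[C]_n) : S \is unitarymx -> S *m S^t* = 1%:M.
Proof. by move/unitarymxP. Qed.

Lemma unitary_r (S : 'M[C]_n) : S \is unitarymx -> S^t* *m S = 1%:M.
Proof.
move=> Su; rewrite -(invmx_unitary Su) mulVmx //; exact: unitarymx_unit.
Qed.

Lemma colnorm (X : 'M[C]_n) k :
  complex.Re ((X^t* *m X) k k) = \sum_i nC (X i k).
Proof.
rewrite mxE Re_sum; apply: eq_bigr => i _; rewrite !mxE mulrC mulcJC //.
Qed.

Lemma tr_mulC (A B : 'M[C]_n) : (A *m B)^t* = B^t* *m A^t*.
Proof. by rewrite trmx_mul map_mxM. Qed.

Lemma spectral_rows (A : 'M[C]_n) : A \is hermsymmx ->
  spectralmx A *m A *m (spectralmx A)^t* = diag_mx (spectral_diag A).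
Proof.
move=> Ah; have /orthomx_spectralP eA := hermitian_normalmx Ah.
have Su := spectral_unitarymx A.
rewrite {2}eA invmx_unitary //.
by rewrite !mulmxA unitary_l // mul1mx -mulmxA unitary_l // mulmx1.
Qed.

Lemma form_spectral_row (A : 'M[C]_n) i : A \is hermsymmx ->
  qform A (row i (spectralmx A)) = complex.Re (spectral_diag A 0 i).
Proof.
by move=> Ah; rewrite /qform row_sesq spectral_rows // mxE eqxx mulr1n.
Qed.

Lemma negtrace_le (A P : 'M[C]_n) (f : pred 'I_n) :
  A \is hermsymmx -> P \is unitarymx ->
  negtrace A <= \sum_(i | f i) qform A (row i P).
Proof.
move=> Ah Pu.
have /orthomx_spectralP eA := hermitian_normalmx Ah.
set W := spectralmx A in eA; set s := spectral_diag A in eA *.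
have Wu : W \is unitarymx by exact: spectral_unitarymx.
rewrite invmx_unitary // in eA.
set M := P *m W^t*.
have Mu : M^t* *m M = 1%:M.
  by rewrite /M tr_mulC trmxCK !mulmxA -(mulmxA W) unitary_r // mulmx1 unitary_l.
have eform i : qform A (row i P) =
    \sum_j complex.Re (s 0 j) * nC (M i j).
  rewrite /qform row_sesq eA.
  have -> : P *m (W^t* *m diag_mx s *m W) *m P^t* = M *m diag_mx s *m M^t*.
    by rewrite /M tr_mulC trmxCK !mulmxA.
  rewrite mul_mx_diag mxE Re_sum; apply: eq_bigr => j _.
  rewrite !mxE mulrAC mulcJC; case: (s 0 j) => a b /=; ring.
have cn j : \sum_(i | f i) nC (M i j) <= 1.
  apply: le_trans (_ : \sum_i nC (M i j) <= 1).
    rewrite [X in _ <= X](bigID f) /= lerDl; apply: sumr_ge0 => i _; exact: nC_ge0.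
  by rewrite -colnorm Mu mxE eqxx.
rewrite /negtrace -/s.
rewrite [X in _ <= X](eq_bigr _ (fun i _ => eform i)).
rewrite exchange_big /=.
apply: ler_sum => j _.
set c := Num.min (complex.Re (s 0 j)) 0.
have c0 : c <= 0 by rewrite /c ge_min lexx orbT.
have cle : c <= complex.Re (s 0 j) by rewrite /c ge_min lexx.
apply: le_trans (_ : \sum_(i | f i) c * nC (M i j) <= _); last first.
  apply: ler_sum => i _; apply: ler_wpM2r => //; exact: nC_ge0.
rewrite -mulr_sumr -[X in X <= _]mulr1.
exact: ler_wnM2l.
Qed.

Lemma sum_nC_unitary (S Z : 'M[C]_n) : S \is unitarymx ->
  \sum_k \sum_i nC ((S *m Z) i k) = \sum_k \sum_i nC (Z i k).
Proof.
move=> Su; apply: eq_bigr => k _; rewrite -!colnorm.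
by rewrite tr_mulC -mulmxA (mulmxA (S^t*)) unitary_r // mul1mx.
Qed.

End Mx.

Lemma trmulC (R : realType) m k p (A : 'M[R[i]]_(m, k)) (B : 'M[R[i]]_(k, p)) :
  (A *m B)^t* = B^t* *m A^t*.
Proof. by rewrite trmx_mul map_mxM. Qed.
Lemma trCK (R : realType) m k (A : 'M[R[i]]_(m, k)) : A^t*^t* = A.
Proof. exact: trmxCK. Qed.

Section Op.
Variable R : realType.
Local Notation C := (R[i]).
Variable n : nat.
Implicit Types (A H P Q : 'M[C]_n) (u v w : 'rV[C]_n).

Definition sq u A v := (u *m A *m v^t*) 0 0.
Definition nrm v : R := \sum_k nC (v 0 k).

Lemma sqDl u u' A v : sq (u + u') A v = sq u A v + sq u' A v.
Proof. by rewrite /sq !mulmxDl mxE. Qed.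

Lemma sqDr u A v v' : sq u A (v + v') = sq u A v + sq u A v'.
Proof.
rewrite /sq !sesqE -big_split /=; apply: eq_bigr => x _.
rewrite -big_split /=; apply: eq_bigr => y _.
by rewrite !mxE rmorphD mulrDr.
Qed.

Lemma sq_conj u A v : A^t* = A -> sq v A u = Num.conj (sq u A v).
Proof.
move=> Ah; rewrite /sq.
have -> : Num.conj ((u *m A *m v^t*) 0 0) = ((u *m A *m v^t*)^t*) 0 0.
  by rewrite !mxE.
by rewrite !trmulC trCK Ah mulmxA.
Qed.

Lemma sq_vec w v : (w *m v^t*) 0 0 = \sum_k w 0 k * Num.conj (v 0 k).
Proof. by rewrite mxE; apply: eq_bigr => k _; rewrite !mxE. Qed.

Lemma nrm_ge0 v : 0 <= nrm v.
Proof. by apply: sumr_ge0 => k _; exact: nC_ge0. Qed.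

Lemma op_ineq H P Q (t : R) : 0 < t ->
  H^t* = H -> P^t* = P -> Q^t* = Q -> Q *m Q = Q -> P + Q = 1%:M ->
  (forall v, t^-1 * nrm (v *m Q) <= qform H (v *m Q)) ->
  forall v, qform (P *m H *m P) v - t * nrm (v *m P *m H *m Q) <= qform H v.
Proof.
move=> t0 Hh Ph Qh QQ PQ hyp v.
set a := v *m P; set b := v *m Q; set w := v *m P *m H *m Q.
have ev : v = a + b by rewrite /a /b -mulmxDr PQ mulmx1.
have eaa : sq a H a = (v *m (P *m H *m P) *m v^t*) 0 0.
  by rewrite /sq /a trmulC Ph !mulmxA.
have eab : sq a H b = (w *m b^t*) 0 0.
  by rewrite /sq /w /b /a !trmulC Qh !mulmxA -(mulmxA _ Q Q) QQ.
have eform : qform H v = complex.Re (sq a H a) + 2 * complex.Re (sq a H b)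
                        + complex.Re (sq b H b).
  rewrite /qform -/(sq v H v) {1 2}ev sqDl !sqDr (sq_conj a b) //.
  rewrite !ReD ReJC; ring.
rewrite eform eaa -/(qform _ _) eab sq_vec Re_sum.
have hb := hyp v; rewrite -/b /qform -/(sq b H b) in hb.
have cb : - (t * nrm w) - nrm b / t <= 2 * \sum_k complex.Re (w 0 k * Num.conj (b 0 k)).
  rewrite mulr_sumr /nrm mulr_sumr big_distrl /= -sumrN -sumrB; apply: ler_sum => k _.
  exact: cross_bound.
have : nrm b / t = t^-1 * nrm b by rewrite mulrC.
lra.
Qed.

End Op.

Local Close Scope ring_scope.

Lemma cdistC L (a b : 'I_L) : cdist a b = cdist b a.
Proof.
rewrite /cdist; case: (leqP a b) => h1; case: (leqP b a) => h2; lia.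
Qed.

Lemma l1distC d L (x y : site d L) : l1dist x y = l1dist y x.
Proof. by rewrite /l1dist; apply: eq_bigr => i _; rewrite cdistC. Qed.

Lemma cdist0 L (a b : 'I_L) : cdist a b = 0%N -> a = b.
Proof.
rewrite /cdist => h; apply: val_inj => /=.
have ha := ltn_ord a; have hb := ltn_ord b.
move: h; case: (leqP a b) => h1 h; lia.
Qed.

Lemma cdist1 L (a b : 'I_L) : cdist a b = 1%N -> b = ordS a \/ b = ord_pred a.
Proof.
rewrite /cdist => h.
have ha := ltn_ord a; have hb := ltn_ord b.
have [hL|hL] := leqP L (a.+1).
  have eL : L = a.+1 by lia.
  move: h; case: (leqP a b) => h1 h.
  - have : (b : nat) = a by lia.
    move=> e; exfalso; move: h; rewrite e subnn; lia.
  - have [e|e] : (b : nat) = a.-1 \/ (b : nat) = 0%N by lia.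
    + right; apply: val_inj => /=; rewrite e.
      have -> : (a + L).-1 = a.-1 + L by lia.
      rewrite modnDr modn_small //; lia.
    + left; apply: val_inj => /=; rewrite e.
      have -> : a.+1 = 1 * L by lia.
      by rewrite modnMl.
move: h; case: (leqP a b) => h1 h.
- have [e|e] : (b : nat) = a.+1 \/ (L = 1 + (b - a))%N by lia.
  + left; apply: val_inj => /=; rewrite e modn_small //.
  + right; apply: val_inj => /=.
    have a0 : (a : nat) = 0%N by lia.
    rewrite a0 add0n modn_small; lia.
- have [e|e] : (b : nat) = a.-1 \/ (L = 1 + (a - b))%N by lia.
  + right; apply: val_inj => /=; rewrite e.
    have -> : (a + L).-1 = a.-1 + L by lia.
    rewrite modnDr modn_small //; lia.
  + (* b = 0, a = L - 1 contradicts a.+1 < L *) lia.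
Qed.

Section Deg.
Variables d L : nat.

Definition nb (x : site d L) (p : 'I_d * bool) : site d L :=
  [ffun j => if j == p.1 then (if p.2 then ordS (x p.1) else ord_pred (x p.1)) else x j].

Lemma deg_le (x : site d L) : (#|[set y | l1dist x y == 1%N]| <= 2 * d)%N.
Proof.
apply: (@leq_trans #|[set nb x p | p in [set: 'I_d * bool]]|).
  apply: subset_leq_card; apply/subsetP => y; rewrite inE => /eqP h.
  have [i hi] : exists i, cdist (x i) (y i) != 0%N.
    apply/existsP; apply: contraT; rewrite negb_exists => /forallP hall.
    move: h; rewrite /l1dist big1 // => i _; apply/eqP; move: (hall i); by rewrite negbK.
  move: h; rewrite /l1dist (bigD1 i) //= => h.
  have hi1 : cdist (x i) (y i) = 1%N.
    move: hi h; rewrite -lt0n; move: (cdist _ _) (\sum_(_ | _) _) => c s; lia.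
  have hr : (\sum_(j | j != i) cdist (x j) (y j) == 0)%N.
    by apply/eqP; move: h; rewrite hi1; move: (\sum_(_ | _) _) => s; lia.
  move: hr; rewrite sum_nat_eq0 => /forallP hr.
  have [e|e] := cdist1 hi1.
  - apply/imsetP; exists (i, true); rewrite ?inE //.
    apply/ffunP => j; rewrite ffunE /=; case: eqP => [->|/eqP ne] //.
    apply/esym/cdist0/eqP; by have := hr j; rewrite ne.
  - apply/imsetP; exists (i, false); rewrite ?inE //.
    apply/ffunP => j; rewrite ffunE /=; case: eqP => [->|/eqP ne] //.
    apply/esym/cdist0/eqP; by have := hr j; rewrite ne.
apply: leq_trans (leq_imset_card _ _) _.
by rewrite cardsT card_prod card_ord card_bool mulnC.
Qed.

End Deg.

Local Open Scope ring_scope.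

Lemma trCE (R : realType) m k (A : 'M[R[i]]_(m, k)) i j : (A^t*) i j = Num.conj (A j i).
Proof. by rewrite !mxE. Qed.

Section Lat.
Variables (d L : nat) (R : realType).
Local Notation C := (R[i]).
Local Notation N := #|{: site d L}|.
Local Notation pt := (@pt d L).

Definition tR (i j : 'I_N) : R := (l1dist (pt i) (pt j) == 1%N)%:R.

Lemma tRC i j : tR i j = tR j i.
Proof. by rewrite /tR l1distC. Qed.

Lemma tR01 i j : tR i j * tR i j = tR i j.
Proof. by rewrite /tR; case: eqP; rewrite ?mulr0 ?mulr1. Qed.

Lemma tR_ge0 i j : 0 <= tR i j.
Proof. by rewrite /tR ler0n. Qed.

Lemma sum_pt (F : site d L -> R) : \sum_(z : site d L) F z = \sum_(i < N) F (pt i).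
Proof.
rewrite (reindex pt) //; exists enum_rank => x _; [exact: enum_valK | exact: enum_rankK].
Qed.

Lemma deg_R i : \sum_j tR i j <= 2 * d%:R.
Proof.
have -> : \sum_j tR i j = (#|[set y | l1dist (pt i) y == 1%N]|)%:R.
  rewrite /tR -(sum_pt (fun y => (l1dist (pt i) y == 1%N)%:R)).
  rewrite -sum1_card natr_sum [RHS]big_mkcond /=; apply: eq_bigr => y _.
  by rewrite inE; case: eqP.
by rewrite -natrM ler_nat deg_le.
Qed.

Variables (mu U : R) (rhot : site d L -> R).

Definition hR (i j : 'I_N) : R :=
  - tR i j + (i == j)%:R * (2 * d%:R - mu + U * rhot (pt i)).

Definition Hm := Kmx d L mu + (U%:C)%C *: multmx rhot.

Lemma HmE i j : Hm i j = ((hR i j)%:C)%C.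
Proof.
rewrite /Hm /Kmx /Lapmx /Tmx /multmx /hR !mxE /tR.
rewrite !rmorphD !rmorphN !rmorphM !rmorph_nat /=.
case: (i == j); case: (_ == 1%N); rewrite /= ?mulr1n ?mulr0n ?mul1r ?mul0r ?addr0 ?subr0 ?oppr0 ?natc;
  apply/eqP; rewrite eq_complex /=; apply/andP; split; apply/eqP; ring.
Qed.

Lemma hRC i j : hR i j = hR j i.
Proof. rewrite /hR tRC; have [->|ne] := eqVneq i j => //. by rewrite !mul0r. Qed.

Lemma Hm_herm : Hm^t* = Hm.
Proof. by apply/matrixP => i j; rewrite trCE !HmE conjCR hRC. Qed.

Lemma hermP (A : 'M[C]_N) : A^t* = A -> A \is hermsymmx.
Proof. by move=> h; apply/is_hermitianmxP; rewrite expr0 scale1r h. Qed.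

Definition pr (A : {set site d L}) (i : 'I_N) : R := (pt i \in A)%:R.

Lemma projmxE (A : {set site d L}) i j :
  projmx R A i j = ((pr A i)%:C *+ (i == j))%C.
Proof. by rewrite /projmx /pr !mxE natc. Qed.

Lemma proj_herm (A : {set site d L}) : (projmx R A)^t* = projmx R A.
Proof.
apply/matrixP => i j; rewrite trCE !projmxE eq_sym.
by case: eqP => [->|_]; rewrite ?mulr1n ?mulr0n ?conjCR // rmorph0.
Qed.

Lemma proj_idem (A : {set site d L}) : projmx R A *m projmx R A = projmx R A.
Proof.
rewrite /projmx mul_diag_mx; apply/matrixP => i j; rewrite !mxE.
by case: (pt i \in A); case: (i == j); rewrite ?mulr1n ?mulr0n ?mulr1 ?mulr0 ?mul0r.
Qed.

Lemma proj_compl (A : {set site d L}) : projmx R A + projmx R (~: A) = 1%:M.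
Proof.
apply/matrixP => i j; rewrite [LHS]mxE !projmxE [RHS]mxE /pr inE.
case: (pt i \in A); case: (i == j); rewrite ?mulr1n ?mulr0n ?addr0 ?add0r //=.
Qed.

Lemma vprojE (A : {set site d L}) (v : 'rV[C]_N) k : (v *m projmx R A) 0 k = v 0 k * ((pr A k)%:C)%C.
Proof. by rewrite /projmx mul_mx_diag !mxE /pr natc. Qed.

Lemma qformHm (b : 'rV[C]_N) :
  qform Hm b = \sum_x \sum_y hR x y * complex.Re (b 0 x * Num.conj (b 0 y)).
Proof.
rewrite /qform sesqE Re_sum; apply: eq_bigr => x _; rewrite Re_sum; apply: eq_bigr => y _.
rewrite HmE; case: (b 0 x) => a1 a2; case: (b 0 y) => b1 b2 /=; ring.
Qed.

Lemma T_bound (b : 'rV[C]_N) :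
  \sum_x \sum_y tR x y * complex.Re (b 0 x * Num.conj (b 0 y)) <=
  2 * d%:R * \sum_x nC (b 0 x).
Proof.
set S := \sum_x _.
have h2 : 2 * S <= \sum_x \sum_y tR x y * (nC (b 0 x) + nC (b 0 y)).
  rewrite /S mulr_sumr; apply: ler_sum => x _; rewrite mulr_sumr; apply: ler_sum => y _.
  rewrite mulrCA; apply: ler_wpM2l; [exact: tR_ge0 | exact: two_re_le].
have e : \sum_x \sum_y tR x y * (nC (b 0 x) + nC (b 0 y)) =
         2 * \sum_x nC (b 0 x) * \sum_y tR x y.
  have e1 : \sum_x \sum_y tR x y * nC (b 0 y) = \sum_x \sum_y tR x y * nC (b 0 x).
    rewrite exchange_big /=; apply: eq_bigr => x _; apply: eq_bigr => y _; by rewrite tRC.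
  rewrite (eq_bigr (fun x => \sum_y tR x y * nC (b 0 x) + \sum_y tR x y * nC (b 0 y)));
    last by move=> x _; rewrite -big_split; apply: eq_bigr => y _; rewrite mulrDr.
  rewrite big_split /= e1.
  have -> : \sum_x \sum_y tR x y * nC (b 0 x) = \sum_x nC (b 0 x) * \sum_y tR x y.
    by apply: eq_bigr => x _; rewrite mulr_sumr; apply: eq_bigr => y _; rewrite mulrC.
  ring.
have h3 : \sum_x nC (b 0 x) * \sum_y tR x y <= \sum_x nC (b 0 x) * (2 * d%:R).
  apply: ler_sum => x _; apply: ler_wpM2l; [exact: nC_ge0 | exact: deg_R].
rewrite -big_distrl /= in h3.
have : 0 <= \sum_x nC (b 0 x) by apply: sumr_ge0 => x _; exact: nC_ge0.
move: h2 h3; rewrite e; set A := \sum_x nC (b 0 x) * _; set B := \sum_x nC (b 0 x).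
move=> h2 h3 h4; nra.
Qed.

Lemma qform_lb (b : 'rV[C]_N) :
  \sum_x (U * rhot (pt x) - mu) * nC (b 0 x) <= qform Hm b.
Proof.
rewrite qformHm.
have e : forall x, \sum_y hR x y * complex.Re (b 0 x * Num.conj (b 0 y)) =
   - \sum_y tR x y * complex.Re (b 0 x * Num.conj (b 0 y)) +
   (2 * d%:R - mu + U * rhot (pt x)) * nC (b 0 x).
  move=> x; rewrite (bigD1 x) //= [in RHS](bigD1 x) //= /hR eqxx.
  rewrite (eq_bigr (fun i => - (tR x i * complex.Re (b 0 x * Num.conj (b 0 i))))); last first.
    by move=> y ne; rewrite eq_sym (negbTE ne) mul0r addr0 mulNr.
  rewrite sumrN mulcJC /=; ring.
rewrite (eq_bigr _ (fun x _ => e x)) big_split /= sumrN.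
have := T_bound b.
set S := \sum_x \sum_y _.
have -> : \sum_x (2 * d%:R - mu + U * rhot (pt x)) * nC (b 0 x) =
   2 * d%:R * \sum_x nC (b 0 x) + \sum_x (U * rhot (pt x) - mu) * nC (b 0 x).
  rewrite mulr_sumr -big_split /=; apply: eq_bigr => x _; ring.
lra.
Qed.

Lemma nC_real (r : R) : nC ((r%:C)%C) = r ^+ 2.
Proof. by rewrite /nC /= expr0n /= addr0. Qed.

Lemma pr_ge0 (A : {set site d L}) i : 0 <= pr A i.
Proof. by rewrite /pr ler0n. Qed.

Variable Om : {set site d L}.

Definition Zm := projmx R Om *m Hm *m projmx R (~: Om).

Lemma ZmE i j : Zm i j = ((pr Om i * hR i j * pr (~: Om) j)%:C)%C.
Proof.
rewrite /Zm /projmx mul_mx_diag mxE mul_diag_mx mxE HmE !mxE /pr !natc.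
rewrite -!rmorphM //.
Qed.

Lemma Zm_term i j : nC (Zm i j) <= pr (bdry Om) i * tR i j.
Proof.
rewrite ZmE nC_real.
have [<-|ne] := eqVneq i j.
  rewrite /pr inE; case: (pt i \in Om) => /=; rewrite ?mulr0 ?mul0r expr0n /=;
    apply: mulr_ge0; [exact: pr_ge0 | exact: tR_ge0 | exact: pr_ge0 | exact: tR_ge0].
rewrite /hR (negbTE ne) mul0r addr0.
rewrite /pr /tR inE.
case Ha: (pt i \in Om); case Hb: (pt j \in Om); case Hl: (l1dist (pt i) (pt j) == 1%N);
  rewrite /= ?mulr0 ?mul0r ?mulr1 ?mul1r ?oppr0 ?expr0n /= ?mulr_ge0 ?ler0n //.
have -> : pt i \in bdry Om.
  rewrite /bdry inE Ha /=; apply/existsP; exists (pt j); by rewrite Hb Hl.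
by rewrite sqrrN expr1n.
Qed.

Lemma sum_pr (A : {set site d L}) : \sum_i pr A i = (#|A|)%:R.
Proof.
rewrite /pr -(sum_pt (fun z => (z \in A)%:R)) -sum1_card natr_sum [RHS]big_mkcond /=.
by apply: eq_bigr => z _; case: (z \in A).
Qed.

Lemma Zm_bound : \sum_i \sum_j nC (Zm i j) <= 2 * d%:R * (#|bdry Om|)%:R.
Proof.
rewrite -sum_pr mulr_sumr; apply: ler_sum => i _.
apply: le_trans (_ : \sum_j pr (bdry Om) i * tR i j <= _).
  by apply: ler_sum => j _; exact: Zm_term.
rewrite -mulr_sumr mulrC; apply: ler_wpM2r; [exact: pr_ge0 | exact: deg_R].
Qed.

End Lat.

Lemma main_gen (d L : nat) (R : realType) (mu U delta : R)
  (rho : site d L -> R) (Om : {set site d L}) (rhot : site d L -> R) :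
  0 < mu -> 0 < U -> 2 * mu / U < delta ->
  (forall x, (x \in Om) = (rho x < delta)) ->
  (forall x, x \notin Om -> rhot x = rho x) ->
  negtrace (projmx R Om *m Hm mu U rhot *m projmx R Om)
    - 8 * d%:R ^+ 2 / (U * delta) * #|bdry Om|%:R
  <= negtrace (Hm mu U rhot).
Proof.
move=> mu0 U0 hdel hOm hrhot.
set H := Hm mu U rhot.
have eH : H = Hm mu U rhot by [].
have d0 : 0 < delta.
  apply: lt_trans hdel; apply: divr_gt0 => //; exact: mulr_gt0.
have Ud0 : 0 < U * delta by exact: mulr_gt0.
have muU : mu <= U * delta / 2.
  have := hdel; rewrite ltr_pdivrMr // => h.
  rewrite ler_pdivlMr //; nra.
set t := 2 / (U * delta).
have t0 : 0 < t by apply: divr_gt0.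
have tinv : t^-1 = U * delta / 2 by rewrite /t invf_div.
set P := projmx R Om; set Q := projmx R (~: Om).
set S := spectralmx H; set s := spectral_diag H.
have Hh : H^t* = H by rewrite eH Hm_herm.
have Hherm : H \is hermsymmx by exact: hermP.
have PHPherm : P *m H *m P \is hermsymmx.
  apply: hermP; rewrite !trmulC Hh /P proj_herm mulmxA //.
have Su : S \is unitarymx by exact: spectral_unitarymx.
have eA : negtrace H = \sum_(i | complex.Re (s 0 i) < 0) qform H (row i S).
  rewrite /negtrace -/s (bigID (fun i => complex.Re (s 0 i) < 0)) /=.
  rewrite [X in _ + X]big1 ?addr0; last first.
    by move=> i; rewrite -leNgt => h; rewrite min_r.
  apply: eq_bigr => i h; rewrite form_spectral_row //.
  by rewrite min_l //; exact: ltW.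
clearbody S s.
have hyp : forall v, t^-1 * nrm (v *m Q) <= qform H (v *m Q).
  move=> v; apply: le_trans (qform_lb mu U rhot (v *m Q)).
  rewrite /nrm mulr_sumr; apply: ler_sum => x _.
  rewrite vprojE /pr inE.
  case hx: (pt x \in Om) => /=.
    by rewrite mulr0 /nC /= expr0n /= addr0 !mulr0.
  rewrite mulr1 tinv; apply: ler_wpM2r; first exact: nC_ge0.
  have : delta <= rho (pt x).
    by move: hx; rewrite hOm; case: ltP.
  rewrite hrhot ?hx // => h; nra.
have Hop := op_ineq t0 Hh (proj_herm R Om) (proj_herm R (~: Om)) (proj_idem R (~: Om))
  (proj_compl R Om) hyp.
set Z := Zm mu U rhot Om.
have eZ : S *m P *m H *m Q = S *m Z by rewrite /Z /Zm !mulmxA.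
have eD : \sum_i nrm (row i S *m P *m H *m Q) = \sum_i \sum_j nC (Z i j).
  have e1 : forall i, nrm (row i S *m P *m H *m Q) = \sum_k nC ((S *m Z) i k).
    move=> i; rewrite /nrm -!row_mul eZ; apply: eq_bigr => k _.
    by rewrite mxE.
  rewrite (eq_bigr _ (fun i _ => e1 i)) exchange_big /=.
  by rewrite (sum_nC_unitary _ Su) [RHS]exchange_big.
have hD := Zm_bound mu U rhot Om.
set F := fun i => complex.Re (s 0 i) < 0.
set B := (#|bdry Om|)%:R : R.
have B0 : 0 <= B by rewrite /B ler0n.
have hC := negtrace_le F PHPherm Su.
have hF : \sum_(i | F i) nrm (row i S *m P *m H *m Q) <=
          \sum_i nrm (row i S *m P *m H *m Q).
  rewrite [X in _ <= X](bigID F) /= lerDl; apply: sumr_ge0 => i _; exact: nrm_ge0.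
have h1 : \sum_(i | F i) (qform (P *m H *m P) (row i S) - t * nrm (row i S *m P *m H *m Q))
          <= \sum_(i | F i) qform H (row i S).
  by apply: ler_sum => i _; exact: Hop.
rewrite sumrB -mulr_sumr in h1.
rewrite eA.
have dd : (d%:R : R) <= d%:R ^+ 2.
  rewrite -natrX ler_nat; case: (d) => // n; rewrite expnS expn1 leq_pmulr //.
have key : 8 * d%:R ^+ 2 / (U * delta) * B - t * (2 * d%:R * B) =
           4 * B * (2 * d%:R ^+ 2 - d%:R) / (U * delta).
  have Un0 : U != 0 by rewrite gt_eqF.
  have dn0 : delta != 0 by rewrite gt_eqF.
  rewrite /t; field; try (by rewrite mulf_neq0); try (by apply/andP; split); by [].
have kpos : 0 <= 4 * B * (2 * d%:R ^+ 2 - d%:R) / (U * delta).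
  apply: divr_ge0; last exact: ltW.
  apply: mulr_ge0; first by apply: mulr_ge0.
  have : (0 : R) <= d%:R ^+ 2 by apply: sqr_ge0.
  rewrite subr_ge0; lra.
rewrite -eD in hD.
have ht : t * (\sum_(i | F i) nrm (row i S *m P *m H *m Q)) <= t * (2 * d%:R * B).
  apply: ler_wpM2l; first exact: ltW.
  exact: le_trans hF hD.
lra.
Qed.

Theorem lemma3p2 (d L : nat) (R : realType) (mu U delta : R)
  (gamma : 'M[R[i]]_#|{: site d L}|) :
  0 < mu -> 0 < U -> 2 * mu / U < delta ->
  density_matrix gamma ->
  let rho : site d L -> R := fun x => complex.Re (gamma (enum_rank x) (enum_rank x)) in
  let Om : {set site d L} := [set x | rho x < delta] in
  let rhot : site d L -> R :=
    fun x => if x \in Om then Num.min (mu / (2 * U)) (rho x) else rho x in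
  let H := Kmx d L mu + U%:C%C *: multmx rhot in
  negtrace (projmx R Om *m H *m projmx R Om)
    - 8 * d%:R ^+ 2 / (U * delta) * #|bdry Om|%:R
  <= negtrace H.
Proof.
move=> mu0 U0 hdel _.
pose rho : site d L -> R := fun x => complex.Re (gamma (enum_rank x) (enum_rank x)).
pose Om : {set site d L} := [set x | rho x < delta].
pose rhot : site d L -> R :=
    fun x => if x \in Om then Num.min (mu / (2 * U)) (rho x) else rho x.
have h1 : forall x, (x \in Om) = (rho x < delta) by move=> x; rewrite inE.
have h2 : forall x, x \notin Om -> rhot x = rho x by move=> x /negbTE hx; rewrite /rhot hx.
exact: (@main_gen d L R mu U delta rho Om rhot mu0 U0 hdel h1 h2).
Qed.
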